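(* Let $n\ge q\ge1$ and write $n=(2^q-1)v+w$ with $v=\lfloor n/(2^q-1)\rfloor$ and $w\in\{0,1,\dots,2^q-2\}$. For any blocked $2^n$ factorial in blocks of size $2^q$ whose generator matrix $X$ has all columns in $\mathcal{X}_q$ (so that all main effects are estimable), the number of estimable two-factor interactions is at most $$\phi_{\max}=\binom{n}{2}-vw-(2^q-1)\binom{v}{2}.$$
   Context: A blocked $2^n$ factorial in blocks of size $2^q$ is specified by a $q\times n$ generator matrix $X$ over $\mathrm{GF}(2)$ of rank $q$: the principal block is the row space of $X$ and the other blocks are its cosets in $\mathrm{GF}(2)^n$. An effect of a set $S$ of factors, with contrast $(-1)^{\sum_{j\in S}x_j}$, is estimable iff its contrast sums to zero over every block; equivalently the two-factor interaction $F_jF_k$ is estimable iff columns $j$ and $k$ of $X$ differ. $\mathcal{X}_q$ is the set of the $2^q-1$ nonzero $q\times1$ vectors over $\mathrm{GF}(2)$. *)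

(* Defs.v *)
From HB Require Import structures.
From mathcomp Require Import all_boot all_order all_algebra.
Set Implicit Arguments. Unset Strict Implicit. Unset Printing Implicit Defensive.
Import GRing.Theory Num.Theory.

(* Treatment combinations of a 2^n factorial: row vectors x in GF(2)^n. *)

Definition contrast (n : nat) (S : {set 'I_n}) (x : 'rV['F_2]_n) : int :=
  (-1) ^+ (\sum_(j in S) (val (x ord0 j)))%N.

Definition block (q n : nat) (X : 'M['F_2]_(q, n)) (a : 'rV['F_2]_n)
  : {set 'rV['F_2]_n} :=
  [set x : 'rV['F_2]_n | ((x - a)%R <= X)%MS].

Definition estimable (q n : nat) (X : 'M['F_2]_(q, n)) (S : {set 'I_n}) : bool :=
  [forall a : 'rV['F_2]_n, (\sum_(x in block X a) contrast S x)%R == 0%R].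

Definition num_estimable_2fi (q n : nat) (X : 'M['F_2]_(q, n)) : nat :=
  #|[set S : {set 'I_n} | (#|S| == 2) && estimable X S]|.

(* Main.v *)
Require Import Defs.
From HB Require Import structures.
From mathcomp Require Import all_boot all_order all_algebra.
From mathcomp Require Import zify ring.
Import GRing.Theory Num.Theory.
Local Open Scope ring_scope.

Lemma not_est (q n : nat) (X : 'M['F_2]_(q, n)) (j k : 'I_n) :
  j != k -> col j X = col k X -> ~~ estimable X [set j; k].
Proof.
move=> njk ecol; apply/negP => /forallP /(_ 0%R) /eqP.
have Hb : forall x, x \in block X 0 -> contrast [set j; k] x = 1%R.
  move=> x; rewrite inE subr0 => /submxP [D ->].
  rewrite /contrast big_setU1 ?inE //= big_set1.
  have -> : (D *m X) ord0 j = (D *m X) ord0 k.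
    rewrite !mxE; apply: eq_bigr => i _.
    have := congr1 (fun M : 'cV['F_2]_q => M i ord0) ecol; rewrite !mxE => ->; done.
  by rewrite addnn -mul2n exprM sqrrN !expr1n.
rewrite (eq_bigr (fun _ => 1%R)) // sumr_const.
have : (0%R : 'rV['F_2]_n) \in block X 0 by rewrite inE subr0 sub0mx.
move=> H0; rewrite -mulr_natl mulr1 => /eqP.
rewrite pnatr_eq0; apply/negP; rewrite -lt0n; apply/card_gt0P; by exists 0%R.
Qed.

Local Close Scope ring_scope.
Lemma bin2x (x : nat) : 'C(x, 2) * 2 = x * x.-1.
Proof. elim: x => [|x IH] //; rewrite binS bin1 mulnDl IH; case: x {IH} => //= x; lia. Qed.

Lemma tangent (x v : nat) : v * x <= 'C(x, 2) + 'C(v.+1, 2).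
Proof.
have h1 := bin2x x; have h2 := bin2x v.+1.
rewrite -(leq_pmul2r (isT : 0 < 2)) mulnDl h1 h2 /=.
case: (leqP x v) => h.
- have [d ->] : exists d, v = x + d by exists (v - x); lia.
  case: x {h h1} => [|x] /=; nia.
- have [d ->] : exists d, x = v.+1 + d by exists (x - v.+1); lia.
  simpl; nia.
Qed.
Local Close Scope ring_scope.

Lemma cardsum (T : finType) (A : {set T}) : #|A| = \sum_(x : T) (x \in A : nat).
Proof. by rewrite -sum1_card big_mkcond. Qed.

Theorem theorem2 (q n : nat) (X : 'M['F_2]_(q, n)) :
  1 <= q -> q <= n ->
  \rank X = q ->
  (forall j : 'I_n, col j X != 0%R) ->
  num_estimable_2fi X <=
    'C(n, 2) - (n %/ (2 ^ q - 1)) * (n %% (2 ^ q - 1))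
             - (2 ^ q - 1) * 'C(n %/ (2 ^ q - 1), 2).
Proof.
move=> q1 qn rk nz.
pose f (j : 'I_n) := col j X.
pose P (c : 'cV['F_2]_q) := [set j | f j == c].
pose D c := [set S : {set 'I_n} | S \subset P c & #|S| == 2].
have step1 : num_estimable_2fi X + \sum_c 'C(#|P c|, 2) <= 'C(n, 2).
  have -> : 'C(n, 2) = #|[set A : {set 'I_n} | #|A| == 2]| by rewrite card_draws card_ord.
  under eq_bigr => c _ do rewrite -cards_draws -/(D c) cardsum.
  rewrite /num_estimable_2fi cardsum exchange_big -big_split /= cardsum.
  apply: leq_sum => S _; rewrite !inE.
  case: (boolP (#|S| == 2)) => [/cards2P [j [k [njk ->]]] | n2] /=.
  - rewrite (bigD1 (f j)) //= big1 => [|c /negbTE ncj]; last first.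
      by rewrite inE subUset !sub1set !inE [f j == c]eq_sym ncj.
    rewrite inE subUset !sub1set !inE eqxx /= addn0.
    case: (boolP (f k == f j)) => [/eqP e | _] /=; last by rewrite addn0; case: estimable.
    by rewrite (negbTE (@not_est _ _ X _ _ njk (esym e))) add0n; case: (_ == _).
  - by rewrite big1 // => c _; rewrite inE (negbTE n2) andbF.
have step2 : \sum_c #|P c| = n.
  under eq_bigr => c _ do rewrite cardsum.
  rewrite exchange_big /=; rewrite -[in RHS](card_ord n) -sum1_card; apply: eq_bigr => j _.
  rewrite (bigD1 (f j)) //= inE eqxx big1 // => c ncj; rewrite inE eq_sym.
  by rewrite (negbTE ncj).
have P0 : #|P 0%R| = 0.
  apply/eqP; rewrite cards_eq0; apply/eqP/setP => j; rewrite !inE.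
  exact/negbTE/nz.
set m := 2 ^ q - 1.
set v := n %/ m.
set w := n %% m.
have cardc : #|[pred c : 'cV['F_2]_q | c != 0%R]| = m.
  by rewrite cardC1 card_mx card_ord muln1 /m subn1.
have step3 : v * n <= \sum_(c | c != 0%R) 'C(#|P c|, 2) + m * 'C(v.+1, 2).
  rewrite -{1}step2 (bigD1 0%R) //= P0 add0n big_distrr /= -cardc -sum1_card big_distrl /=.
  rewrite -big_split /=.
  by apply: leq_sum => c _; rewrite mul1n tangent.
have step1' : num_estimable_2fi X + \sum_(c | c != 0%R) 'C(#|P c|, 2) <= 'C(n, 2).
  by move: step1; rewrite (bigD1 0%R) //= P0.
have hn : n = v * m + w by apply: divn_eq.
have hb := bin2x v.
have hs : 'C(v.+1, 2) = 'C(v, 2) + v by rewrite binS bin1.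
rewrite -/m -/v -/w.
set S2 := \sum_(c | c != 0%R) _ in step3 step1'.
rewrite hs in step3.
have e1 : v * n = v * v * m + v * w by rewrite hn mulnDr mulnA.
have e2 : v * v * m = m * 'C(v,2) * 2 + m * v.
  rewrite -[m * _ * 2]mulnA hb; case: (v) => [|v'] /=; first by rewrite !muln0.
  ring.
rewrite mulnDr in step3.
move: step1' step3 e1 e2; rewrite -/S2.
move: (num_estimable_2fi X) S2 (m * 'C(v, 2)) (m * v) (v * v * m) (v * w) (v * n) ('C(n, 2)).
move=> a b c d e g h i; lia.
Qed.
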